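(* For any simple undirected graph $G$, $$n_G(\mathcal{L}_5)=\sum_{\{st,uv\}\in Q}\Big(\sum_{w\in\Gamma(s)\setminus\{s,t,u,v\}}(a_{uw}+a_{vw})+\sum_{w\in\Gamma(t)\setminus\{s,t,u,v\}}(a_{uw}+a_{vw})\Big).$$
   Context: $a_{ij}$ are the adjacency matrix entries, $\Gamma(x)$ is the neighbourhood of $x$. $Q$ is the set of unordered pairs $\{st,uv\}$ of edges with $s,t,u,v$ pairwise distinct. $n_G(F)$ is the number of (not necessarily induced) subgraphs isomorphic to $F$; $\mathcal{L}_5$ is the path on 5 vertices. *)

(* Defs.v *)
(* A simple graph is a symmetric irreflexive relation adj on a finType T. *)
From mathcomp Require Import all_boot.
Set Implicit Arguments. Unset Strict Implicit. Unset Printing Implicit Defensive.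

Section Graph.
Variables (T : finType) (adj : rel T).

Definition edges : {set {set T}} :=
  [set e : {set T} | [exists x, exists y, adj x y && (e == [set x; y])]].

Definition path5_edges (f : {ffun 'I_5 -> T}) : {set {set T}} :=
  [set [set f (inord i); f (inord i.+1)] | i : 'I_4].

(* n_G(L_5): number of subgraphs of G isomorphic to the path on 5 vertices.
   Since L_5 has no isolated vertices such a subgraph is determined by its edge set,
   which must be the edge set of some injective labelling of L_5 and be contained in E(G). *)
Definition n_L5 : nat :=
  #|[set S : {set {set T}} | (S \subset edges) &&
      [exists f : {ffun 'I_5 -> T}, injectiveb f && (S == path5_edges f)]]|.

Definition Q : {set {set {set T}}} :=
  [set q : {set {set T}} | [exists e1 in edges, exists e2 in edges,
      [disjoint e1 & e2] && (q == [set e1; e2])]].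

(* for an edge pair {st,uv}:
   sum_{w in Γ(s)\{s,t,u,v}} (a_uw + a_vw) + sum_{w in Γ(t)\{s,t,u,v}} (a_uw + a_vw),
   with e1 = {s,t}, e2 = {u,v} *)
Definition pair_term (e1 e2 : {set T}) : nat :=
  \sum_(x in e1) \sum_(w | adj x w && (w \notin e1 :|: e2)) \sum_(y in e2) (adj y w : nat).

Definition fst_of (q : {set {set T}}) : {set T} := odflt set0 [pick e in q].
Definition snd_of (q : {set {set T}}) : {set T} := odflt set0 [pick e in q :\ fst_of q].

End Graph.

(* Main.v *)
Require Import Defs.
From mathcomp Require Import all_boot.
Set Implicit Arguments. Unset Strict Implicit. Unset Printing Implicit Defensive.

Lemma set2_eq (U : finType) (a b c d : U) :
  [set a; b] = [set c; d] -> (a = c /\ b = d) \/ (a = d /\ b = c).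
Proof.
move=> E.
have ha : a \in [set c; d] by rewrite -E !inE eqxx.
have hb : b \in [set c; d] by rewrite -E !inE eqxx orbT.
have hc : c \in [set a; b] by rewrite E !inE eqxx.
have hd : d \in [set a; b] by rewrite E !inE eqxx orbT.
rewrite !inE in ha hb hc hd.
case/orP: ha => /eqP ha; case/orP: hb => /eqP hb; subst; (try by left); (try by right).
- by move: hd; rewrite orbb => /eqP ->; right.
- by move: hc; rewrite orbb => /eqP ->; left.
Qed.

Section G.
Variables (T : finType) (adj : rel T).
Hypotheses (adj_sym : symmetric adj) (adj_irr : irreflexive adj).

Lemma edge2 x y : ([set x; y] \in edges adj) = adj x y.
Proof.
apply/idP/idP.
- rewrite inE => /existsP[u /existsP[v /andP[huv /eqP E]]].
  by case: (set2_eq E) => -[-> ->] //; rewrite adj_sym.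
- by move=> h; rewrite inE; apply/existsP; exists x; apply/existsP; exists y; rewrite h eqxx.
Qed.

Lemma edge_neq x y : adj x y -> x != y.
Proof. by move=> h; apply/eqP => E; move: h; rewrite E adj_irr. Qed.

Lemma edgeP e : e \in edges adj -> exists x y, adj x y /\ e = [set x; y].
Proof. by rewrite inE => /existsP[u /existsP[v /andP[huv /eqP E]]]; exists u, v. Qed.


Lemma sum_edges (F : {set T} -> T -> nat) :
  \sum_(e in edges adj) \sum_(x in e) F e x =
  \sum_(a : T) \sum_(b : T) (adj a b) * F [set a; b] b.
Proof.
pose A := [set p : T * T | adj p.1 p.2].
pose h := fun p : T * T => ([set p.1; p.2], p.2).
have hinj : {in A &, injective h}.
  move=> [a b] [c d]; rewrite !inE /h /= => hab hcd [E eb]; subst d.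
  by case: (set2_eq E) => -[ea eb]; subst => //; rewrite adj_irr in hab.
rewrite pair_big_dep /=.
transitivity (\sum_(u in h @: A) F u.1 u.2).
  apply: eq_bigl => -[e x] /=; apply/idP/imsetP.
  - case/andP => /(edgeP) [a [b [hab ->]]]; rewrite !inE => /orP[]/eqP->.
    + by exists (b, a); rewrite ?inE /h /= 1?adj_sym // setUC.
    + by exists (a, b); rewrite ?inE.
  - by case=> -[a b]; rewrite inE /h /= => hab [-> ->]; rewrite edge2 hab !inE eqxx orbT.
rewrite big_imset //= pair_big /= big_mkcond /=; apply: eq_bigr => -[a b] _ /=.
by rewrite inE /=; case: (adj a b); rewrite ?mul1n ?mul0n.
Qed.


Lemma pt_expand e1 e2 : pair_term adj e1 e2 =
  \sum_(x in e1) \sum_(y in e2) \sum_(w : T) ((adj x w && (w \notin e1 :|: e2) && adj y w) : nat).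
Proof.
rewrite /pair_term; apply: eq_bigr => x _; rewrite big_mkcond [RHS]exchange_big /=.
apply: eq_bigr => w _; case: (adj x w && _) => //=.
by rewrite big1.
Qed.

Lemma pt_sym e1 e2 : pair_term adj e1 e2 = pair_term adj e2 e1.
Proof.
rewrite !pt_expand [RHS]exchange_big /=; apply: eq_bigr => x _; apply: eq_bigr => y _.
by apply: eq_bigr => w _; rewrite setUC -!andbA; case: (adj x w); case: (adj y w); rewrite ?andbF.
Qed.

Lemma fst_snd (q : {set {set T}}) e1 e2 : q = [set e1; e2] -> e1 != e2 ->
  (fst_of q = e1 /\ snd_of q = e2) \/ (fst_of q = e2 /\ snd_of q = e1).
Proof.
move=> -> ne.
rewrite /snd_of /fst_of; case: pickP => [f hf | h0]; last first.
  by have := h0 e1; rewrite !inE eqxx.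
case: pickP => [s hs | h0] /=.
  move: hf hs; rewrite !inE => /orP[]/eqP-> /andP[hsf /orP[]/eqP hs]; subst;
   rewrite ?eqxx in hsf => //; [by left | by right].
move: hf; rewrite !inE => /orP[]/eqP hf; subst.
- by have := h0 e2; rewrite !inE eq_sym ne eqxx orbT.
- by have := h0 e1; rewrite !inE ne eqxx.
Qed.

Definition Dset := [set p : {set T} * {set T} |
   (p.1 \in edges adj) && (p.2 \in edges adj) && [disjoint p.1 & p.2]].

Lemma B1 : \sum_(e1 in edges adj) \sum_(e2 in edges adj | [disjoint e1 & e2]) pair_term adj e1 e2
  = 2 * \sum_(q in Q adj) pair_term adj (fst_of q) (snd_of q).
Proof.
pose h := fun p : {set T} * {set T} => [set p.1; p.2].
transitivity (\sum_(p in Dset) pair_term adj p.1 p.2).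
  by rewrite pair_big_dep; apply: eq_bigl => p; rewrite [p \in Dset]inE andbA.
rewrite (partition_big_imset h).
have -> : h @: Dset = Q adj.
  apply/setP => q; rewrite inE; apply/imsetP/idP.
  - case=> -[e1 e2]; rewrite inE /= => /andP[/andP[h1 h2] hd] ->.
    by apply/existsP; exists e1; rewrite h1; apply/existsP; exists e2; rewrite h2 hd eqxx.
  - case/existsP => e1 /andP[h1 /existsP[e2 /andP[h2 /andP[hd /eqP ->]]]].
    by exists (e1, e2); rewrite // inE /= h1 h2 hd.
rewrite big_distrr /=; apply: eq_bigr => q.
rewrite inE => /existsP[e1 /andP[h1 /existsP[e2 /andP[h2 /andP[hd /eqP hq]]]]].
have ne : e1 != e2.
  apply/eqP => E; subst e2.
  case: (edgeP h1) => x [y [_ E1]].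
  have hx : x \in e1 by rewrite E1 !inE eqxx.
  by move: (disjointFr hd hx); rewrite hx.
rewrite (eq_bigl (fun p => p \in [set (e1, e2); (e2, e1)])); last first.
  move=> [a b]; rewrite in_set2 [_ \in Dset]inE /= !xpair_eqE /h hq /=; apply/idP/idP.
  - by case/andP => _ /eqP /set2_eq [[-> ->] | [-> ->]]; rewrite !eqxx ?orbT.
  - case/orP => /andP[/eqP -> /eqP ->]; rewrite ?eqxx ?h1 ?h2 ?hd //=.
    by rewrite disjoint_sym hd setUC eqxx.
  rewrite big_setU1 /=; last by rewrite in_set1 xpair_eqE (negbTE ne).
rewrite (big_set1 addn) /= (pt_sym e2 e1) addnn -mul2n.
by case: (fst_snd hq ne) => -[-> ->]; rewrite // pt_sym.
Qed.


Notation o k := (inord k : 'I_5).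

Lemma p5e_expand (f : {ffun 'I_5 -> T}) : path5_edges f =
  [set [set f (o 0); f (o 1)]; [set f (o 1); f (o 2)]; [set f (o 2); f (o 3)]; [set f (o 3); f (o 4)]].
Proof.
apply/setP => S; apply/imsetP/idP.
- by case=> -[[|[|[|[|i]]]] Hi] //= _ ->; rewrite !inE eqxx ?orbT.
- rewrite !inE => /orP[/orP[/orP[]|]|] /eqP ->.
  + by exists (inord 0); rewrite // inordK.
  + by exists (inord 1); rewrite // inordK.
  + by exists (inord 2); rewrite // inordK.
  + by exists (inord 3); rewrite // inordK.
Qed.

Lemma p5e_sub (f : {ffun 'I_5 -> T}) : (path5_edges f \subset edges adj) =
  [&& adj (f (o 0)) (f (o 1)), adj (f (o 1)) (f (o 2)), adj (f (o 2)) (f (o 3)) & adj (f (o 3)) (f (o 4))].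
Proof. by rewrite p5e_expand !subUset !sub1set !edge2 -!andbA. Qed.

Lemma enum5 : enum 'I_5 = [:: o 0; o 1; o 2; o 3; o 4].
Proof. by apply: (inj_map val_inj); rewrite val_enum_ord /= !inordK. Qed.

Lemma injb5 (f : {ffun 'I_5 -> T}) :
  injectiveb f = uniq [:: f (o 0); f (o 1); f (o 2); f (o 3); f (o 4)].
Proof. by rewrite /injectiveb /dinjectiveb enum5. Qed.


Lemma natpath_b (a b c d e : nat) : a < 5 -> b < 5 -> c < 5 -> d < 5 -> e < 5 ->
  [==> uniq [:: a; b; c; d; e],
  (a.+1 == b) || (b.+1 == a), (b.+1 == c) || (c.+1 == b),
  (c.+1 == d) || (d.+1 == c) , (d.+1 == e) || (e.+1 == d) =>
  [&& a == 0, b == 1, c == 2, d == 3 & e == 4] || [&& a == 4, b == 3, c == 2, d == 1 & e == 0]].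
Proof.
by case: a => [|[|[|[|[|a]]]]] //; case: b => [|[|[|[|[|b]]]]] //; case: c => [|[|[|[|[|c]]]]] //;
 case: d => [|[|[|[|[|d]]]]] //; case: e => [|[|[|[|[|e]]]]].
Qed.

Definition frev (f : {ffun 'I_5 -> T}) : {ffun 'I_5 -> T} := [ffun i => f (rev_ord i)].

Lemma in_p5e_img (f : {ffun 'I_5 -> T}) v S :
  S \in path5_edges f -> v \in S -> exists j, v = f j.
Proof. by case/imsetP => i _ ->; rewrite !inE => /orP[]/eqP->; eexists. Qed.

Lemma o_all (P : 'I_5 -> Prop) : P (o 0) -> P (o 1) -> P (o 2) -> P (o 3) -> P (o 4) -> forall i, P i.
Proof.
move=> p0 p1 p2 p3 p4 i; rewrite -(inord_val i).
by case: i => -[|[|[|[|[|i]]]]] Hi //=.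
Qed.

Lemma p5e_key (f g : {ffun 'I_5 -> T}) : injectiveb f -> injectiveb g ->
  path5_edges g = path5_edges f -> g = f \/ g = frev f.
Proof.
move=> /injectiveP fi /injectiveP gi E.
have img : forall k, exists j, g k = f j.
  have H : forall k S, S \in path5_edges g -> g k \in S -> exists j, g k = f j.
    by move=> k S; rewrite E; apply: in_p5e_img.
  apply: o_all.
  - by apply: (H _ [set g (o 0); g (o 1)]); rewrite ?p5e_expand !inE eqxx ?orbT.
  - by apply: (H _ [set g (o 0); g (o 1)]); rewrite ?p5e_expand !inE eqxx ?orbT.
  - by apply: (H _ [set g (o 1); g (o 2)]); rewrite ?p5e_expand !inE eqxx ?orbT.
  - by apply: (H _ [set g (o 2); g (o 3)]); rewrite ?p5e_expand !inE eqxx ?orbT.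
  - by apply: (H _ [set g (o 3); g (o 4)]); rewrite ?p5e_expand !inE eqxx ?orbT.
have [s Hs] := fin_all_exists img.
have si : injective s by move=> x y sxy; apply: gi; rewrite !Hs sxy.
have step : forall k, k < 4 -> ((val (s (o k))).+1 == val (s (o k.+1))) ||
                               ((val (s (o k.+1))).+1 == val (s (o k))).
  move=> k hk.
  have : [set g (o k); g (o k.+1)] \in path5_edges f.
    by rewrite -E; apply/imsetP; exists (inord k); rewrite // inordK.
  case/imsetP => j _; rewrite !Hs => /set2_eq [[/fi h1 /fi h2]|[/fi h1 /fi h2]];
    rewrite h1 h2 /= !inordK ?eqxx ?orbT //; by [exact: (ltn_ord j) | exact: (leqW (ltn_ord j))].
have := natpath_b (ltn_ord (s (o 0))) (ltn_ord (s (o 1))) (ltn_ord (s (o 2)))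
   (ltn_ord (s (o 3))) (ltn_ord (s (o 4))).
rewrite (step 0) // (step 1) // (step 2) // (step 3) //.
have -> : uniq [:: val (s (o 0)); val (s (o 1)); val (s (o 2)); val (s (o 3)); val (s (o 4))].
  have inj : injective (fun i => val (s i)) by move=> x y /val_inj /si.
  by rewrite (map_inj_uniq inj [:: o 0; o 1; o 2; o 3; o 4]) -enum5 enum_uniq.
move=> /= /orP[] /and5P[/eqP h0 /eqP h1 /eqP h2 /eqP h3 /eqP h4]; [left | right];
  apply/ffunP; apply: o_all; rewrite ?ffunE Hs; congr (f _); apply: val_inj;
  rewrite /= ?inordK //= ?h0 ?h1 ?h2 ?h3 ?h4.
Qed.


Lemma revo k : k < 5 -> rev_ord (o k) = o (4 - k).
Proof. by move=> hk; apply: val_inj; rewrite /= !inordK // ltnS leq_subr. Qed.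

Lemma frev_p5e f : path5_edges (frev f) = path5_edges f.
Proof.
rewrite !p5e_expand /frev !ffunE !revo //= !subn0.
rewrite (_ : 4 - 1 = 3) // (_ : 4 - 2 = 2) // (_ : 4 - 3 = 1) // (_ : 4 - 4 = 0) //.
rewrite (setUC [set f (o 4)] [set f (o 3)]) (setUC [set f (o 3)] [set f (o 2)]).
rewrite (setUC [set f (o 2)] [set f (o 1)]) (setUC [set f (o 1)] [set f (o 0)]).
apply/setP => S; rewrite !inE.
by case: (S == [set f (o 0); f (o 1)]); case: (S == [set f (o 1); f (o 2)]);
   case: (S == [set f (o 2); f (o 3)]); case: (S == [set f (o 3); f (o 4)]); rewrite ?orbT.
Qed.

Definition Pset := [set f : {ffun 'I_5 -> T} | injectiveb f && (path5_edges f \subset edges adj)].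

Lemma frev_P f : f \in Pset -> frev f \in Pset.
Proof.
rewrite !inE frev_p5e => /andP[/injectiveP fi ->]; rewrite andbT.
by apply/injectiveP => i j; rewrite !ffunE => /fi /rev_ord_inj.
Qed.

Lemma frev_neq (f : {ffun 'I_5 -> T}) : injectiveb f -> f != frev f.
Proof.
move=> /injectiveP fi; apply/eqP => /ffunP /(_ (o 0)); rewrite ffunE revo // => /fi.
by move/(congr1 val); rewrite /= !inordK.
Qed.

Lemma A2 : 2 * n_L5 adj = #|Pset|.
Proof.
have -> : n_L5 adj = #|(@path5_edges T) @: Pset|.
  rewrite /n_L5; apply: eq_card => S; rewrite inE; apply/andP/imsetP.
  - by case=> sub /existsP[f /andP[fi /eqP E]]; exists f => //; rewrite inE fi -E sub.
  - by case=> f; rewrite inE => /andP[fi sub] ->; split => //; apply/existsP; exists f; rewrite fi eqxx.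
rewrite -[#|Pset|]sum1_card (partition_big_imset (@path5_edges T)) /=.
rewrite mulnC -sum_nat_const; apply: eq_bigr => S /imsetP[f fP ->].
rewrite (eq_bigl (fun g => g \in [set f; frev f])); last first.
  move=> g; rewrite !inE; apply/idP/idP.
  - case/andP => gP /eqP E; move: fP gP; rewrite !inE => /andP[fi _] /andP[gi _].
    by case: (p5e_key fi gi E) => ->; rewrite eqxx ?orbT.
  - case/orP => /eqP ->; rewrite ?eqxx ?andbT //; first by move: fP; rewrite inE.
    by move: (frev_P fP); rewrite inE => ->; rewrite frev_p5e eqxx.
rewrite sum1_card cards2 frev_neq //.
by move: fP; rewrite inE => /andP[].
Qed.


Definition mk5 (a b c d e : T) : {ffun 'I_5 -> T} := [ffun i : 'I_5 => nth a [:: a; b; e; d; c] i].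

Lemma sum_ffun5 (F : {ffun 'I_5 -> T} -> nat) :
  \sum_(f : {ffun 'I_5 -> T}) F f =
  \sum_(a : T) \sum_(b : T) \sum_(c : T) \sum_(d : T) \sum_(e : T) F (mk5 a b c d e).
Proof.
under eq_bigr => a _ do under eq_bigr => b _ do under eq_bigr => c _ do rewrite pair_big /=.
under eq_bigr => a _ do under eq_bigr => b _ do rewrite pair_big /=.
under eq_bigr => a _ do rewrite pair_big /=.
rewrite pair_big /=.
pose h := fun u : T * (T * (T * (T * T))) => mk5 u.1 u.2.1 u.2.2.1 u.2.2.2.1 u.2.2.2.2.
pose hi := fun f : {ffun 'I_5 -> T} => (f (o 0), (f (o 1), (f (o 4), (f (o 3), f (o 2))))).
rewrite (reindex h); last first.
  exists hi => [[a [b [c [d e]]]] _ | f _].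
  - by rewrite /hi /h /mk5 !ffunE !inordK.
  - apply/ffunP; apply: o_all; rewrite /hi /h /mk5 ffunE /= inordK //.
by apply: eq_bigl.
Qed.


Lemma disj2 (a b c d : T) :
  [disjoint [set a; b] & [set c; d]] = [&& a != c, a != d, b != c & b != d].
Proof.
apply/idP/idP.
- move=> hd.
  have ha : a \in [set a; b] by rewrite !inE eqxx.
  have hb : b \in [set a; b] by rewrite !inE eqxx orbT.
  move: (disjointFr hd ha) (disjointFr hd hb); rewrite !inE.
  by case/norP => -> -> /norP[-> ->].
- case/and4P => h1 h2 h3 h4; apply/pred0P => x /=; rewrite !inE.
  apply/negbTE/negP => /andP[/orP[]/eqP-> /orP[]/eqP E]; subst;
    by rewrite eqxx in h1 h2 h3 h4.
Qed.

Lemma cond5 a b c d w :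
  (mk5 a b c d w \in Pset) =
  adj a b && adj c d && ([disjoint [set a; b] & [set c; d]] &&
     (adj b w && (w \notin [set a; b] :|: [set c; d]) && adj d w)).
Proof.
rewrite inE injb5 p5e_sub /mk5 !ffunE /= !inordK // disj2 /= !inE !negb_or.
rewrite (adj_sym w d) (adj_sym d c).
apply/idP/idP.
- case/andP => /andP[/and4P[ab aw ad ac] /andP[/and3P[bw bd bc] /andP[/andP[wd wc] /andP[dc _]]]].
  case/and4P => -> -> -> -> /=.
  by rewrite ac ad bc bd (eq_sym w a) (eq_sym w b) aw bw wc wd.
- case/and4P => /andP[hab hcd] /and4P[ac ad bc bd] /and4P[hbw /andP[wa wb] wc wd] hdw.
  by rewrite ac ad bc bd wc wd (eq_sym a w) (eq_sym b w) wa wb (eq_sym d c)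
    (edge_neq hab) (edge_neq hcd) hab hbw hdw hcd.
Qed.


Lemma B2 : \sum_(e1 in edges adj) \sum_(e2 in edges adj | [disjoint e1 & e2]) pair_term adj e1 e2
  = #|Pset|.
Proof.
transitivity (\sum_(e1 in edges adj) \sum_(x in e1) \sum_(e2 in edges adj) \sum_(y in e2) \sum_(w : T)
   (([disjoint e1 & e2] && (adj x w && (w \notin e1 :|: e2) && adj y w)) : nat)).
  apply: eq_bigr => e1 _; rewrite big_mkcondr /= [RHS]exchange_big /=; apply: eq_bigr => e2 _.
  rewrite pt_expand; case: [disjoint e1 & e2] => //=.
  by rewrite big1 // => x _; rewrite big1 // => y _; rewrite big1.
rewrite sum_edges.
under eq_bigr => a _ do under eq_bigr => b _ do rewrite sum_edges.
rewrite -sum1_card [RHS]big_mkcond /= (sum_ffun5 (fun f => if f \in Pset then 1 else 0)).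
apply: eq_bigr => a _; apply: eq_bigr => b _; rewrite big_distrr; apply: eq_bigr => c _.
rewrite big_distrr /=; apply: eq_bigr => d _; rewrite mulnA big_distrr /=; apply: eq_bigr => w _.
by rewrite cond5 !mulnb; case: [&& _, _, _ & _].
Qed.

End G.

Theorem proposition2 (T : finType) (adj : rel T)
  (adj_sym : symmetric adj) (adj_irr : irreflexive adj) :
  n_L5 adj = \sum_(q in Q adj) pair_term adj (fst_of q) (snd_of q).
Proof.
apply/eqP; rewrite -(eqn_pmul2l (isT : 0 < 2)); apply/eqP.
by rewrite A2 // -B1 // B2.
Qed.
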